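(* Let $n\geqslant 2$ and $N=2^n-1$. There is a bijection between the set of $n$-tuples $(y_1,\dots,y_n)$ of positive integers and the set of reduced $N$-tuples $(z_1,\dots,z_N)$ of positive integers, such that $$\forall j\in\{1,\dots,n\},\quad y_j=\prod_{1\leqslant h\leqslant N}z_h^{\varepsilon_j(h)}\quad\text{and}\quad \mathrm{lcm}(y_1,\dots,y_n)=\prod_{1\leqslant h\leqslant N}z_h.$$
   Context: For $h\in\{1,\dots,N\}$ write $h=\sum_{j=1}^n\varepsilon_j(h)2^{j-1}$ with $\varepsilon_j(h)\in\{0,1\}$. Write $h\preceq\ell$ if $\varepsilon_j(h)\leqslant\varepsilon_j(\ell)$ for all $j$. An $N$-tuple $(z_1,\dots,z_N)$ is reduced if $\gcd(z_h,z_\ell)=1$ whenever $h\not\preceq\ell$ and $\ell\not\preceq h$. *)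

(* Defs.v *)
From mathcomp Require Import all_boot.
Set Implicit Arguments. Unset Strict Implicit. Unset Printing Implicit Defensive.

(* eps j h : the j-th binary digit of h, with j 1-based as in the paper:
   eps j h = epsilon_j(h), h = sum_j epsilon_j(h) 2^(j-1). *)
Definition eps (j h : nat) : nat := odd (h %/ 2 ^ j.-1).

Definition bprec (n h l : nat) : Prop :=
  forall j, 1 <= j <= n -> eps j h <= eps j l.

Definition Nn (n : nat) : nat := 2 ^ n - 1.

(* tuples are indexed 0-based: y : 'I_n -> nat with y_j = y (j-1),
   z : 'I_N -> nat with z_h = z (h-1). *)
Definition positive_tuple (m : nat) (x : {ffun 'I_m -> nat}) : Prop :=
  forall i, 0 < x i.

Definition reduced (n : nat) (z : {ffun 'I_(Nn n) -> nat}) : Prop :=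
  forall h l : 'I_(Nn n),
    ~ bprec n h.+1 l.+1 -> ~ bprec n l.+1 h.+1 -> gcdn (z h) (z l) = 1.

(* Main.v *)
Require Import Defs.
From mathcomp Require Import all_boot zify.
Set Implicit Arguments. Unset Strict Implicit. Unset Printing Implicit Defensive.

Lemma bits_sum (n : nat) (b : nat -> bool) (j : nat) :
  odd ((\sum_(i < n) b i * 2 ^ i) %/ 2 ^ j) = (j < n) && b j.
Proof.
elim: n b j => [|n IH] b j.
  by rewrite big_ord0 div0n.
rewrite big_ord_recl expn0 muln1.
have -> : \sum_(i < n) b (bump 0 i) * 2 ^ bump 0 i = (\sum_(i < n) b i.+1 * 2 ^ i) * 2.
  rewrite big_distrl /=; apply: eq_bigr => i _; rewrite /bump /= add1n expnS -mulnA (mulnC 2) //.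
case: j => [|j].
  rewrite expn0 divn1 oddD oddM /= andbF addbF; by case: (b 0).
rewrite expnS divnMA addnC divnMDl // (divn_small (_ : (b ord0 : nat) < 2)); last by case: (b ord0).
by rewrite addn0 (IH (fun i => b i.+1)).
Qed.

Lemma bits_lt (n : nat) (b : nat -> bool) : \sum_(i < n) b i * 2 ^ i < 2 ^ n.
Proof.
elim: n => [|n IH]; first by rewrite big_ord0.
rewrite big_ord_recr /= expnS.
rewrite mul2n -addnn -addSn; apply: leq_add; first exact: IH.
by case: (b _); rewrite /= ?mul1n ?mul0n.
Qed.

Lemma bits_expand (n x : nat) : x < 2 ^ n -> x = \sum_(i < n) odd (x %/ 2 ^ i) * 2 ^ i.
Proof.
elim: n x => [|n IH] x hx.
  by rewrite big_ord0; move: hx; rewrite expn0; lia.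
rewrite big_ord_recl expn0 divn1 muln1.
have h2 : x %/ 2 < 2 ^ n by rewrite ltn_divLR // -expnSr.
rewrite {1}(divn_eq x 2) (IH _ h2) big_distrl /= modn2.
rewrite addnC; congr (_ + _); apply: eq_bigr => i _.
by rewrite /bump /= add1n expnS divnMA -mulnA (mulnC (2 ^ i)).
Qed.

Definition bitb (j h : nat) : bool := odd (h.+1 %/ 2 ^ j).
Definition Pt n (a : 'I_n -> nat) (t : nat) (h : 'I_(Nn n)) : bool :=
  [forall j : 'I_n, (t < a j) == bitb j h].
Definition E n (a : 'I_n -> nat) (h : 'I_(Nn n)) : nat :=
  \sum_(t < \max_(j < n) a j) Pt a t h.

Lemma lt_Nn n (h : 'I_(Nn n)) : h.+1 < 2 ^ n.
Proof. have := ltn_ord h; have := expn_gt0 2 n; rewrite /Nn; lia. Qed.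

Lemma bits_sum_ord n (b : 'I_n -> bool) (j : 'I_n) :
  odd ((\sum_(i < n) b i * 2 ^ i) %/ 2 ^ j) = b j.
Proof.
pose b' (i : nat) := [exists k : 'I_n, (val k == i) && b k].
have Hb : forall i : 'I_n, b' i = b i.
  move=> i; apply/existsP/idP => [[k /andP[/eqP/val_inj -> //]]|Hi].
  by exists i; rewrite eqxx.
rewrite (eq_bigr (fun i : 'I_n => b' i * 2 ^ i)); last by move=> i _; rewrite Hb.
by rewrite bits_sum ltn_ord Hb.
Qed.

Lemma Pt_uniq n (a : 'I_n -> nat) t h l : Pt a t h -> Pt a t l -> h = l.
Proof.
move=> /forallP Hh /forallP Hl; apply/val_inj; apply: succn_inj.
rewrite (bits_expand (lt_Nn h)) (bits_expand (lt_Nn l)); apply: eq_bigr => j _.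
change (bitb j h * 2 ^ j = bitb j l * 2 ^ j).
by move: (Hh j) (Hl j) => /eqP <- /eqP <-.
Qed.

Lemma Pt_ex n (a : 'I_n -> nat) t (j0 : 'I_n) : t < a j0 -> exists h, Pt a t h.
Proof.
move=> Hj0.
set x := \sum_(i < n) (t < a i) * 2 ^ i.
have xpos : 0 < x.
  rewrite /x (bigD1 j0) //= Hj0 mul1n; have := expn_gt0 2 j0; lia.
have xlt : x < 2 ^ n.
  have := bits_sum_ord (fun i => t < a i).
  have := @bits_lt n (fun i => [exists k : 'I_n, (val k == i) && (t < a k)]).
  rewrite (eq_bigr (fun i : 'I_n => (t < a i) * 2 ^ i)) // => i _.
  congr (_ * _); congr nat_of_bool; apply/existsP/idP => [[k /andP[/eqP/val_inj -> //]]|Hi].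
  by exists i; rewrite eqxx.
have hlt : x.-1 < Nn n by rewrite /Nn; lia.
exists (Ordinal hlt); apply/forallP => j; rewrite /bitb /= prednK //.
by rewrite bits_sum_ord.
Qed.

Lemma exists_bit n (h : 'I_(Nn n)) : exists j : 'I_n, bitb j h.
Proof.
case: (pickP (fun j : 'I_n => bitb j h)) => [j Hj | H]; first by exists j.
have := bits_expand (lt_Nn h); rewrite big1 // => j _.
by have := H j; rewrite /bitb => ->.
Qed.

Lemma sumPt_bit n (a : 'I_n -> nat) t (j : 'I_n) :
  \sum_(h < Nn n) bitb j h * Pt a t h = (t < a j).
Proof.
case: (pickP (Pt a t)) => [h0 H0 | H0].
  rewrite (bigD1 h0) //= big1 => [|h hne]; last first.
    case E: (Pt a t h); last by rewrite muln0.
    by rewrite (Pt_uniq E H0) eqxx in hne.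
  rewrite H0 muln1 addn0; move/forallP: H0 => /(_ j) /eqP ->. done.
rewrite big1 => [|h _]; last by rewrite H0 muln0.
case: ltnP => // Hlt.
by have [h Hh] := Pt_ex Hlt; rewrite H0 in Hh.
Qed.

Lemma sumPt n (a : 'I_n -> nat) t :
  \sum_(h < Nn n) (Pt a t h : nat) = (t < \max_(j < n) a j).
Proof.
case: (pickP (Pt a t)) => [h0 H0 | H0].
  rewrite (bigD1 h0) //= big1 => [|h hne]; last first.
    case E: (Pt a t h) => //.
    by rewrite (Pt_uniq E H0) eqxx in hne.
  rewrite H0 addn0; have [j Hj] := exists_bit h0.
  move/forallP: H0 => /(_ j); rewrite Hj => /eqP Htj.
  have := @leq_bigmax _ (fun j => a j) j; rewrite /=.
  by move=> H; rewrite (leq_trans Htj H).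
rewrite big1 => [|h _]; last by rewrite H0.
case: ltnP => // Hlt.
case: (pickP (fun j => t < a j)) => [j Hj | Hn].
  by have [h Hh] := Pt_ex Hj; rewrite H0 in Hh.
have : \max_(j < n) a j <= t.
  by apply/bigmax_leqP => j _; rewrite leqNgt Hn.
lia.
Qed.

Lemma sum_lt M k : \sum_(t < M) (t < k) = minn k M.
Proof.
elim: M => [|M IH]; first by rewrite big_ord0 minn0.
rewrite big_ord_recr /= IH.
case: ltnP => H; lia.
Qed.

Lemma E_bits n (a : 'I_n -> nat) (j : 'I_n) :
  \sum_(h < Nn n) bitb j h * E a h = a j.
Proof.
rewrite /E; under eq_bigr do rewrite big_distrr.
rewrite exchange_big /=; under eq_bigr do rewrite sumPt_bit.
rewrite sum_lt; apply/minn_idPl; exact: (@leq_bigmax _ (fun j => a j) j).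
Qed.

Lemma E_sum n (a : 'I_n -> nat) :
  \sum_(h < Nn n) E a h = \max_(j < n) a j.
Proof.
rewrite /E exchange_big /=; under eq_bigr do rewrite sumPt.
by rewrite sum_lt minnn.
Qed.

Lemma bprecP n (h l : 'I_(Nn n)) :
  (forall j : 'I_n, bitb j h -> bitb j l) -> bprec n h.+1 l.+1.
Proof.
move=> H [|j] //= Hj; have := H (Ordinal Hj).
rewrite /eps /bitb /=; case: (odd (h.+1 %/ _)); case: (odd (l.+1 %/ _)) => //.
by move=> /(_ isT).
Qed.

Lemma bprecE n (h l : 'I_(Nn n)) :
  bprec n h.+1 l.+1 -> forall j : 'I_n, bitb j h -> bitb j l.
Proof.
move=> H j Hb; have := H j.+1; rewrite ltn_ord /= => /(_ isT).
by rewrite /eps /= -/(bitb j h) -/(bitb j l) Hb lt0b.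
Qed.

Lemma pos_sum M (b : 'I_M -> bool) : 0 < \sum_(t < M) (b t : nat) -> exists t, b t.
Proof.
case: (pickP b) => [t Ht | H]; first by exists t.
by rewrite big1 // => t _; rewrite H.
Qed.

Lemma E_chain n (a : 'I_n -> nat) h l : 0 < E a h -> 0 < E a l ->
  bprec n h.+1 l.+1 \/ bprec n l.+1 h.+1.
Proof.
move=> /pos_sum [t /forallP Ht] /pos_sum [s /forallP Hs].
case: (leqP t s) => Hts; [right|left]; apply: bprecP => j.
  move: (Ht j) (Hs j) => /eqP <- /eqP <- H; exact: leq_ltn_trans Hts H.
move: (Ht j) (Hs j) => /eqP <- /eqP <- H; exact: ltn_trans Hts H.
Qed.

Lemma sum_eq_le (I : eqType) (r : seq I) (P : pred I) F G :
  (forall i, P i -> F i <= G i) -> \sum_(i <- r | P i) G i <= \sum_(i <- r | P i) F i ->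
  forall i, i \in r -> P i -> F i = G i.
Proof.
move=> le; elim: r => [|x r IH] //.
rewrite !big_cons; case Px: (P x) => Hs i; rewrite inE => /orP [/eqP ->|Hi] Pi.
- have := le x Px; have := @leq_sum _ r P F G le; lia.
- apply: IH Hi Pi; have := le x Px; lia.
- by rewrite Pi in Px.
- exact: IH Hs i Hi Pi.
Qed.

Lemma E_eq n (c : 'I_(Nn n) -> nat) :
  (forall h l, 0 < c h -> 0 < c l -> bprec n h.+1 l.+1 \/ bprec n l.+1 h.+1) ->
  forall h, E (fun j => \sum_(l < Nn n) bitb j l * c l) h = c h.
Proof.
move=> chain.
set a := fun j : 'I_n => \sum_(l < Nn n) bitb j l * c l.
have step1 : forall h, c h <= E a h.
  move=> h; case: (posnP (c h)) => [->//|ch].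
  have key : forall j k : 'I_n, bitb j h -> ~~ bitb k h -> c h + a k <= a j.
    move=> j k Hj Hk; rewrite /a (bigD1 h) //= [X in _ <= X](bigD1 h) //=.
    rewrite Hj (negbTE Hk) mul1n mul0n add0n leq_add2l.
    apply: leq_sum => l _.
    case: (posnP (c l)) => [->|cl]; first by rewrite !muln0.
    case Hkl: (bitb k l); last by rewrite mul0n.
    have [Hhl|Hlh] := chain h l ch cl.
      by rewrite (bprecE Hhl Hj).
    by rewrite (bprecE Hlh Hkl) in Hk.
  set lo := \max_(k < n | ~~ bitb k h) a k.
  have Hlo : forall j : 'I_n, bitb j h -> lo + c h <= a j.
    move=> j Hj.
    have : lo <= a j - c h.
      apply/bigmax_leqP => k Hk; have := key j k Hj Hk; lia.
    have := key j j Hj; have : c h <= a j.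
      rewrite /a (bigD1 h) //= Hj mul1n; exact: leq_addr.
    lia.
  have [j0 Hj0] := exists_bit h.
  have HM : lo + c h <= \max_(j < n) a j.
    exact: leq_trans (Hlo j0 Hj0) (@leq_bigmax _ (fun j => a j) j0).
  have Hint : forall t, lo <= t < lo + c h -> Pt a t h.
    move=> t /andP [H1 H2]; apply/forallP => j.
    case Hb: (bitb j h).
      by rewrite (leq_trans H2 (Hlo j Hb)).
    have : a j <= lo by rewrite /lo; apply: (@leq_bigmax_cond _ (fun k : 'I_n => ~~ bitb k h) (fun k => a k) j); rewrite Hb.
    by move=> H; rewrite ltnNge (leq_trans H H1).
  rewrite /E; set M := \max_(j < n) a j.
  have : \sum_(t < M) (lo <= t < lo + c h) <= \sum_(t < M) Pt a t h.
    apply: leq_sum => t _; case H: (lo <= t < lo + c h) => //.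
    by rewrite (Hint t H).
  have : \sum_(t < M) (t < lo + c h) = \sum_(t < M) (lo <= t < lo + c h) + \sum_(t < M) (t < lo).
    rewrite -big_split /=; apply: eq_bigr => t _.
    case: (ltnP t lo) => H1; case: (ltnP t (lo + c h)) => H2 /=; lia.
  rewrite !sum_lt; move: HM; rewrite -/M; lia.
have step2 : \sum_(h < Nn n) E a h <= \sum_(h < Nn n) c h.
  rewrite E_sum; apply/bigmax_leqP => j _; rewrite /a.
  by apply: leq_sum => l _; case: (bitb j l); rewrite ?mul1n ?mul0n.
move=> h; symmetry.
apply: (@sum_eq_le _ (index_enum _) xpredT c (E a) (fun i _ => step1 i) step2) => //.
Qed.

Lemma eq_from_logn m k : 0 < m -> 0 < k ->
  (forall p, prime p -> logn p m = logn p k) -> m = k.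
Proof.
move=> m0 k0 H; rewrite -(partnT m0) -(partnT k0); apply: eq_partn_from_log => // p _.
case Pp: (prime p); first exact: H.
by rewrite [logn p m]lognE [logn p k]lognE Pp.
Qed.

Lemma logn_prod q (I : Type) (r : seq I) (P : pred I) (F : I -> nat) :
  (forall i, P i -> 0 < F i) ->
  0 < \prod_(i <- r | P i) F i /\
  logn q (\prod_(i <- r | P i) F i) = \sum_(i <- r | P i) logn q (F i).
Proof.
move=> FP.
apply: (big_ind2 (fun m k => 0 < m /\ logn q m = k)) => [|m1 k1 m2 k2 [h1 e1] [h2 e2]|i Pi].
- by rewrite logn1.
- by split; [rewrite muln_gt0 h1 h2 | rewrite lognM // e1 e2].
- by split; [apply: FP|].
Qed.

Lemma logn_prodE q (I : Type) (r : seq I) (P : pred I) (F : I -> nat) :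
  (forall i, P i -> 0 < F i) ->
  logn q (\prod_(i <- r | P i) F i) = \sum_(i <- r | P i) logn q (F i).
Proof. by move=> H; case: (logn_prod q r H). Qed.

Lemma logn_lcm_big q n (F : 'I_n -> nat) :
  (forall i, 0 < F i) ->
  logn q (\big[lcmn/1]_(i < n) F i) = \max_(i < n) logn q (F i).
Proof.
move=> FP.
suff [] : 0 < \big[lcmn/1]_(i < n) F i /\
  logn q (\big[lcmn/1]_(i < n) F i) = \max_(i < n) logn q (F i) by [].
apply: (big_ind2 (fun m k => 0 < m /\ logn q m = k)) => [|m1 k1 m2 k2 [h1 e1] [h2 e2]|i Pi].
- by rewrite logn1.
- by split; [rewrite lcmn_gt0 h1 h2 | rewrite logn_lcm // e1 e2].
- by split; [apply: FP|].
Qed.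

Lemma E0 n (a : 'I_n -> nat) h : (forall j, a j = 0) -> E a h = 0.
Proof.
move=> H; have := E_sum a.
have -> : \max_(j < n) a j = 0 by apply/eqP; rewrite -leqn0; apply/bigmax_leqP => j _; rewrite H.
by rewrite (bigD1 h) //=; lia.
Qed.

Lemma eq_E n (a b : 'I_n -> nat) h : a =1 b -> E a h = E b h.
Proof.
move=> H; rewrite /E (eq_bigr (fun j => b j) (fun j _ => H j)).
by apply: eq_bigr => t _; rewrite /Pt; congr nat_of_bool; apply: eq_forallb => j; rewrite H.
Qed.

Definition fz n (y : {ffun 'I_n -> nat}) : {ffun 'I_(Nn n) -> nat} :=
  [ffun h => \prod_(p < (\prod_(j < n) y j).+1 | prime p)
               p ^ E (fun j => logn p (y j)) h].

Lemma fz_pos n (y : {ffun 'I_n -> nat}) h : 0 < fz y h.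
Proof.
rewrite ffunE; apply: prodn_cond_gt0 => p Pp; by rewrite expn_gt0 prime_gt0.
Qed.

Lemma logn_fz n (y : {ffun 'I_n -> nat}) h q : positive_tuple y ->
  logn q (fz y h) = E (fun j => logn q (y j)) h.
Proof.
move=> ypos; rewrite ffunE.
set B := (\prod_(j < n) y j).+1.
rewrite logn_prodE; last by move=> p Pp; rewrite expn_gt0 prime_gt0.
under eq_bigr => p Pp do rewrite lognX (logn_prime q Pp).
case Pq: (prime q); last first.
  rewrite big1 => [|p Pp]; last first.
    by case: eqP => [e|]; [rewrite e Pp in Pq | rewrite muln0].
  by symmetry; apply: E0 => j; rewrite lognE Pq.
case: (ltnP q B) => qB.
  rewrite (bigD1 (Ordinal qB)) //= eqxx muln1 big1 ?addn0 // => p /andP[Pp ne].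
  case: eqP => [e|]; last by rewrite muln0.
  by exfalso; move: ne; apply/negP/negPn/eqP; apply: val_inj; rewrite /= e.
rewrite big1 => [|p _]; last by rewrite (gtn_eqF (leq_trans (ltn_ord p) qB)) muln0.
symmetry; apply: E0 => j.
have yle : y j <= \prod_(j < n) y j.
  by rewrite (bigD1 j) //= leq_pmulr // prodn_gt0.
rewrite lognE; case: ifP => //; move/and3P=> [_ _ /(dvdn_leq (ypos j))].
move: qB; rewrite /B; lia.
Qed.

Lemma bprec_dec n (h l : 'I_(Nn n)) :
  bprec n h.+1 l.+1 <-> [forall j : 'I_n, bitb j h ==> bitb j l].
Proof.
split => [H|/forallP H].
  by apply/forallP => j; apply/implyP; exact: bprecE H j.
by apply: bprecP => j; apply/implyP/H.
Qed.

Unset Implicit Arguments.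
Theorem mainTheorem2 (n : nat) (hn : 2 <= n) :
  exists f : {ffun 'I_n -> nat} -> {ffun 'I_(Nn n) -> nat},
    (forall y, positive_tuple y -> positive_tuple (f y) /\ reduced (f y)) /\
    (forall y1 y2, positive_tuple y1 -> positive_tuple y2 -> f y1 = f y2 -> y1 = y2) /\
    (forall z, positive_tuple z -> reduced z ->
       exists y, positive_tuple y /\ f y = z) /\
    (forall y, positive_tuple y ->
       (forall j : 'I_n, y j = \prod_(h < Nn n) (f y h) ^ eps j.+1 h.+1) /\
       \big[lcmn/1]_(j < n) y j = \prod_(h < Nn n) f y h).
Proof.
exists (@fz n).
have fact4 : forall y, positive_tuple y ->
    (forall j : 'I_n, y j = \prod_(h < Nn n) (fz y h) ^ eps j.+1 h.+1) /\
    \big[lcmn/1]_(j < n) y j = \prod_(h < Nn n) fz y h.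
  move=> y ypos; split.
    move=> j; apply: eq_from_logn => [//| |q Pq].
      by apply: prodn_gt0 => h; rewrite expn_gt0 fz_pos.
    rewrite logn_prodE; last by move=> h _; rewrite expn_gt0 fz_pos.
    under eq_bigr => h _ do rewrite lognX logn_fz //.
    exact: (esym (E_bits (fun j => logn q (y j)) j)).
  apply: eq_from_logn => [| |q Pq].
  - apply: (big_ind (fun m => 0 < m)) => // [a b ha hb]; by rewrite lcmn_gt0 ha hb.
  - by apply: prodn_gt0 => h; rewrite fz_pos.
  rewrite logn_lcm_big // logn_prodE; last by move=> h _; rewrite fz_pos.
  under eq_bigr => h _ do rewrite logn_fz //.
  by rewrite E_sum.
split.
  move=> y ypos; split; first by move=> h; exact: fz_pos.
  move=> h l nhl nlh.
  set g := gcdn _ _.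
  have g0 : 0 < g by rewrite gcdn_gt0 fz_pos.
  case: (ltngtP g 1) => // [g1|g1]; first lia.
  exfalso; have pp := pdiv_prime g1; have pd := pdiv_dvd g.
  have Hh : 0 < logn (pdiv g) (fz y h).
    by rewrite logn_gt0 mem_primes pp fz_pos (dvdn_trans pd (dvdn_gcdl _ _)).
  have Hl : 0 < logn (pdiv g) (fz y l).
    by rewrite logn_gt0 mem_primes pp fz_pos (dvdn_trans pd (dvdn_gcdr _ _)).
  rewrite !logn_fz // in Hh Hl.
  by case: (E_chain Hh Hl) => [/nhl|/nlh].
split.
  move=> y1 y2 p1 p2 e; apply/ffunP => j.
  by rewrite ((fact4 y1 p1).1 j) ((fact4 y2 p2).1 j) e.
split; last exact: fact4.
move=> z zpos zred.
set y := [ffun j : 'I_n => \prod_(h < Nn n) z h ^ eps j.+1 h.+1].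
have ypos : positive_tuple y.
  by move=> j; rewrite ffunE prodn_gt0 // => h; rewrite expn_gt0 zpos.
exists y; split => //.
apply/ffunP => h; apply: eq_from_logn; [exact: fz_pos | exact: zpos | move=> q Pq].
rewrite logn_fz //.
rewrite (@eq_E _ _ (fun j => \sum_(l < Nn n) bitb j l * logn q (z l))); last first.
  move=> j; rewrite ffunE logn_prodE; last by move=> l _; rewrite expn_gt0 zpos.
  by apply: eq_bigr => l _; rewrite lognX.
apply: (E_eq (c := fun l => logn q (z l))).
move=> h1 l1 c1 c2.
case: (boolP [forall j : 'I_n, bitb j h1 ==> bitb j l1]) => [H|H1].
  by left; apply/bprec_dec.
case: (boolP [forall j : 'I_n, bitb j l1 ==> bitb j h1]) => [H|H2].
  by right; apply/bprec_dec.
exfalso.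
have n1 : ~ bprec n h1.+1 l1.+1 by move/bprec_dec; apply/negP.
have n2 : ~ bprec n l1.+1 h1.+1 by move/bprec_dec; apply/negP.
have g1 := zred h1 l1 n1 n2.
rewrite logn_gt0 mem_primes in c1; rewrite logn_gt0 mem_primes in c2.
case/and3P: c1 => _ _ d1; case/and3P: c2 => _ _ d2.
have : q %| gcdn (z h1) (z l1) by rewrite dvdn_gcd d1 d2.
rewrite g1 dvdn1 => /eqP q1; by rewrite q1 in Pq.
Qed.
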